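(* Let $I\unlhd \mathcal O_K[x_1,\dots,x_n]$ be an ideal and let $w\in\mathbb R^n$. Then $$\overline{\operatorname{in}_{(-1,w)}(\pi^{-1}I)}\big|_{t=1}=\operatorname{in}_{\nu,w}(I).$$
   Context: Let $K$ be a complete field with a non-trivial discrete valuation $\nu:K\to\mathbb R\cup\{\infty\}$ and a uniformizing parameter $p\in K$, with $\nu$ normalized so that $\nu(p)=1$. Let $\mathcal O_K$ be its ring of integers and $\mathfrak K$ its residue field. Let $R\subseteq\mathcal O_K$ be a dense noetherian subring with $p\in R$. Write $x=(x_1,\dots,x_n)$. The map $\pi:R[[t]][x]\to\mathcal O_K[x]$, $t\mapsto p$, is surjective with kernel $\langle p-t\rangle$. For an ideal $I$, $\pi^{-1}I$ denotes its preimage in $R[[t]][x]$. Initial forms over $K$: for $f=\sum_\alpha c_\alpha x^\alpha\in K[x]$ and $w\in\mathbb R^n$, $\operatorname{in}_{\nu,w}(f)=\sum \overline{c_\alpha p^{-\nu(c_\alpha)}}\,x^\alpha\in\mathfrak K[x]$. The sum runs over those $\alpha$ with $c_\alpha\neq0$ for which $w\cdot\alpha-\nu(c_\alpha)$ is maximal, and the bar denotes reduction to $\mathfrak K$. For a subset $I$, $\operatorname{in}_{\nu,w}(I)$ is the ideal of $\mathfrak K[x]$ generated by all $\operatorname{in}_{\nu,w}(f)$ with $f\in I$. Initial forms over $R[[t]]$: for $f=\sum_{\beta,\alpha}c_{\alpha,\beta}t^\beta x^\alpha\in R[[t]][x]$ and $w\in\mathbb R_{<0}\times\mathbb R^n$,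 $\operatorname{in}_w(f)\in R[t,x]$ is the sum of the terms $c_{\alpha,\beta}t^\beta x^\alpha$ for which $w\cdot(\beta,\alpha)$ is maximal. For an ideal $J$, $\operatorname{in}_w(J)\unlhd R[t,x]$ is generated by all $\operatorname{in}_w(f)$ with $f\in J$. For $J\unlhd R[t,x]$, $\overline{J}|_{t=1}$ denotes the image of $J$ under the map $R[t,x]\to\mathfrak K[x]$. This map reduces coefficients modulo the maximal ideal of $\mathcal O_K$ and substitutes $t=1$. *)

(* Defs.v *)
From HB Require Import structures.
From mathcomp Require Import all_boot all_order all_algebra.
From mathcomp Require Import reals.
From mathcomp Require Import mpoly.
Set Implicit Arguments. Unset Strict Implicit. Unset Printing Implicit Defensive.
Import Order.TTheory GRing.Theory Num.Theory.
Local Open Scope ring_scope.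

Definition is_ideal (A : comNzRingType) (P : A -> Prop) : Prop :=
  [/\ P 0, (forall x y, P x -> P y -> P (x + y)) &
      (forall a x, P x -> P (a * x))].

Definition gen_ideal (A : comNzRingType) (S : A -> Prop) (x : A) : Prop :=
  exists (k : nat) (a s : 'I_k -> A),
    (forall i, S (s i)) /\ x = \sum_(i < k) a i * s i.

Definition noetherian (A : comNzRingType) : Prop :=
  forall P : A -> Prop, is_ideal P ->
    exists (k : nat) (s : 'I_k -> A),
      forall x, P x <-> gen_ideal (fun y => exists i, y = s i) x.

(* Discrete valuation nu : K -> Z (the value at 0, i.e. +oo, is never  *)
(* used: every statement about nu x is guarded by x != 0).             *)

Section Valued.
Variables (K : fieldType) (nu : K -> int).

Definition is_discrete_valuation : Prop :=
  (forall x y, x != 0 -> y != 0 -> nu (x * y) = nu x + nu y) /\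
  (forall x y, x != 0 -> y != 0 -> x + y != 0 ->
      Num.min (nu x) (nu y) <= nu (x + y)).

Definition inO (x : K) : Prop := x = 0 \/ 0 <= nu x.

Definition close (M : int) (x y : K) : Prop := x = y \/ M <= nu (x - y).

Definition cauchy (u : nat -> K) : Prop :=
  forall M : int, exists N, forall a b, (N <= a)%N -> (N <= b)%N -> close M (u a) (u b).

Definition converges_to (u : nat -> K) (L : K) : Prop :=
  forall M : int, exists N, forall a, (N <= a)%N -> close M (u a) L.

Definition complete_val : Prop :=
  forall u, cauchy u -> exists L, converges_to u L.

(* kk is the residue field of O_K, with reduction map red : O_K -> kk *)
Definition is_residue_map (kk : fieldType) (red : K -> kk) : Prop :=
  [/\ (forall x y, inO x -> inO y -> red (x + y) = red x + red y),
      (forall x y, inO x -> inO y -> red (x * y) = red x * red y),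
      red 1 = 1,
      (forall x, inO x -> (red x = 0 <-> (x = 0 \/ 0 < nu x))) &
      (forall z : kk, exists x, inO x /\ red x = z)].

Definition dense_in_O (R : comNzRingType) (iota : R -> K) : Prop :=
  forall x, inO x -> forall M : int, exists r, close M x (iota r).

(* ideal of O_K[x] : a subset of K[x] consisting of polynomials with   *)
(* coefficients in O_K, which is an ideal of the ring O_K[x]           *)
Definition coeffs_in_O (n : nat) (f : {mpoly K[n]}) : Prop :=
  forall m, inO f@_m.

Definition is_OK_ideal (n : nat) (I : {mpoly K[n]} -> Prop) : Prop :=
  [/\ (forall f, I f -> coeffs_in_O f), I 0,
      (forall f g, I f -> I g -> I (f + g)) &
      (forall a f, coeffs_in_O a -> I f -> I (a * f))].
End Valued.

(* R[[t]][x]: families (c_{alpha,beta}) of elements of R indexed by    *)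
(* beta : nat (power of t) and alpha : 'X_{1..n} (monomial in x) with  *)
(* only finitely many alpha occurring.                                 *)

Definition pstx (R : comNzRingType) (n : nat) := nat -> 'X_{1..n} -> R.

Definition pstx_poly_in_x (R : comNzRingType) n (f : pstx R n) : Prop :=
  exists s : seq 'X_{1..n}, forall b a, f b a != 0 -> a \in s.

(* pi : R[[t]][x] -> O_K[x], t |-> p : coefficientwise the convergent  *)
(* series sum_beta c_{alpha,beta} p^beta                                *)
Definition is_pi (K : fieldType) (nu : K -> int) (R : comNzRingType) (iota : R -> K)
   (p : K) n (f : pstx R n) (g : {mpoly K[n]}) : Prop :=
  pstx_poly_in_x f /\
  forall a, converges_to nu (fun N => \sum_(b < N) iota (f b a) * p ^+ b) g@_a.

Definition pi_preimage (K : fieldType) (nu : K -> int) (R : comNzRingType) (iota : R -> K)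
   (p : K) n (I : {mpoly K[n]} -> Prop) (f : pstx R n) : Prop :=
  pstx_poly_in_x f /\ exists g, I g /\ is_pi nu iota p f g.

(* R[t,x] is {mpoly R[n.+1]}: variable 0 is t, variable i.+1 is x_i.   *)

Definition mtail n (m : 'X_{1..n.+1}) : 'X_{1..n} := [multinom m (lift ord0 i) | i < n].

Definition dotw (F : realType) n (w : 'I_n -> F) (a : 'X_{1..n}) : F :=
  \sum_(i < n) w i * (a i)%:R.

Definition wt (F : realType) n (w0 : F) (w : 'I_n -> F) (b : nat) (a : 'X_{1..n}) : F :=
  w0 * b%:R + dotw w a.

Definition is_init_form (F : realType) (R : comNzRingType) n (w0 : F) (w : 'I_n -> F)
   (f : pstx R n) (g : {mpoly R[n.+1]}) : Prop :=
  forall m : 'X_{1..n.+1},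
    let b := m ord0 in let a := mtail m in
    ((f b a != 0 /\ forall b' a', f b' a' != 0 -> wt w0 w b' a' <= wt w0 w b a) ->
        g@_m = f b a) /\
    (~ (f b a != 0 /\ forall b' a', f b' a' != 0 -> wt w0 w b' a' <= wt w0 w b a) ->
        g@_m = 0).

Definition init_ideal (F : realType) (R : comNzRingType) n (w0 : F) (w : 'I_n -> F)
   (J : pstx R n -> Prop) : {mpoly R[n.+1]} -> Prop :=
  gen_ideal (fun g => exists f, J f /\ is_init_form w0 w f g).

Definition red_t1 (K : fieldType) (kk : fieldType) (red : K -> kk)
   (R : comNzRingType) (iota : R -> K) n (g : {mpoly R[n.+1]}) : {mpoly kk[n]} :=
  \sum_(m <- msupp g) red (iota g@_m) *: 'X_[mtail m].

Definition red_t1_image (K : fieldType) (kk : fieldType) (red : K -> kk)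
   (R : comNzRingType) (iota : R -> K) n (J : {mpoly R[n.+1]} -> Prop)
   (q : {mpoly kk[n]}) : Prop :=
  exists g, J g /\ red_t1 red iota g = q.

Definition init_nu (F : realType) (K : fieldType) (nu : K -> int) (kk : fieldType)
   (red : K -> kk) (p : K) n (w : 'I_n -> F) (f : {mpoly K[n]}) : {mpoly kk[n]} :=
  \sum_(a <- msupp f |
         all (fun a' => dotw w a' - (nu f@_a')%:~R <= dotw w a - (nu f@_a)%:~R) (msupp f))
     red (f@_a * p ^ (- nu f@_a)) *: 'X_[a].

Definition init_nu_ideal (F : realType) (K : fieldType) (nu : K -> int) (kk : fieldType)
   (red : K -> kk) (p : K) n (w : 'I_n -> F) (I : {mpoly K[n]} -> Prop) :
   {mpoly kk[n]} -> Prop :=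
  gen_ideal (fun h => exists f, I f /\ h = init_nu nu red p w f).

(* Main.v *)
Require Import Defs.
From HB Require Import structures.
From mathcomp Require Import all_boot all_order all_algebra.
From mathcomp Require Import reals.
From mathcomp Require Import mpoly.
From mathcomp Require Import zify ring lra.
From Stdlib Require Import Classical.
Import Order.TTheory GRing.Theory Num.Theory.
Set Implicit Arguments. Unset Strict Implicit. Unset Printing Implicit Defensive.
Local Open Scope ring_scope.
Section Val.
Variables (K : fieldType) (nu : K -> int) (Hnu : is_discrete_valuation nu).

Definition small (M : int) (x : K) := x = 0 \/ M <= nu x.

Lemma nuM x y : x != 0 -> y != 0 -> nu (x * y) = nu x + nu y.
Proof. by case: Hnu => H _; apply: H. Qed.

Lemma nu1 : nu 1 = 0.
Proof.
have := nuM (oner_neq0 K) (oner_neq0 K); rewrite mulr1 => h.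
by apply: (addrI (nu 1)); rewrite addr0 -h.
Qed.

Lemma nuN1 : nu (-1) = 0.
Proof.
have hn : (-1 : K) != 0 by rewrite oppr_eq0 oner_eq0.
have := nuM hn hn; rewrite mulrNN mulr1 nu1 => h.
have : nu (-1) *+ 2 == 0 by rewrite mulr2n -h.
by rewrite mulrn_eq0 /= => /eqP.
Qed.

Lemma nuN x : x != 0 -> nu (- x) = nu x.
Proof.
move=> hx; have hn : (-1 : K) != 0 by rewrite oppr_eq0 oner_eq0.
by rewrite -mulN1r nuM // nuN1 add0r.
Qed.

Lemma nuV x : x != 0 -> nu (x^-1) = - nu x.
Proof.
move=> hx; have hi : x^-1 != 0 by rewrite invr_eq0.
have := nuM hx hi; rewrite mulfV // nu1 => h; lia.
Qed.

Lemma nuD x y : x != 0 -> y != 0 -> x + y != 0 -> Num.min (nu x) (nu y) <= nu (x + y).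
Proof. by case: Hnu => _ H; apply: H. Qed.

Lemma small0 M : small M 0. Proof. by left. Qed.

Lemma smallD M x y : small M x -> small M y -> small M (x + y).
Proof.
case=> [->|hx]; first by rewrite add0r.
case=> [->|hy]; first by rewrite addr0; right.
have [->|hxy] := eqVneq (x + y) 0; first by left.
right; have [->|x0] := eqVneq x 0; first by rewrite add0r.
have [->|y0] := eqVneq y 0; first by rewrite addr0.
apply: le_trans (nuD x0 y0 hxy).
by rewrite le_min hx hy.
Qed.

Lemma smallN M x : small M x -> small M (- x).
Proof.
case=> [->|h]; first by rewrite oppr0; left.
have [->|x0] := eqVneq x 0; first by rewrite oppr0; left.
by right; rewrite nuN.
Qed.

Lemma smallB M x y : small M x -> small M y -> small M (x - y).
Proof. by move=> hx hy; apply: smallD => //; apply: smallN. Qed.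

Lemma small_le M M' x : M' <= M -> small M x -> small M' x.
Proof. by move=> hM [->|h]; [left|right; apply: le_trans h]. Qed.

Lemma smallM M N x y : small M x -> small N y -> small (M + N) (x * y).
Proof.
case=> [->|hx]; first by rewrite mul0r; left.
case=> [->|hy]; first by rewrite mulr0; left.
have [->|x0] := eqVneq x 0; first by rewrite mul0r; left.
have [->|y0] := eqVneq y 0; first by rewrite mulr0; left.
by right; rewrite nuM // lerD.
Qed.

Lemma smallMO M a x : inO nu a -> small M x -> small M (a * x).
Proof. by move=> ha hx; have := smallM ha hx; rewrite add0r. Qed.

Lemma small_sum M (I : Type) (r : seq I) (P : pred I) (F : I -> K) :
  (forall i, P i -> small M (F i)) -> small M (\sum_(i <- r | P i) F i).
Proof.
move=> h; elim/big_rec: _ => [|i x Pi hx]; first exact: small0.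
by apply: smallD => //; apply: h.
Qed.

Lemma close_small M x y : close nu M x y <-> small M (x - y).
Proof.
split.
  by case=> [->|h]; [rewrite subrr; left|right].
case=> [/eqP|h]; [rewrite subr_eq0 => /eqP ->; left|right] => //.
Qed.

Lemma close_trans M x y z : close nu M x y -> close nu M y z -> close nu M x z.
Proof.
move=> /close_small h1 /close_small h2; apply/close_small.
by have := smallD h1 h2; rewrite addrA subrK.
Qed.

Lemma close_sym M x y : close nu M x y -> close nu M y x.
Proof. by move=> /close_small h; apply/close_small; rewrite -opprB; apply: smallN. Qed.

Lemma close_le M M' x y : M' <= M -> close nu M x y -> close nu M' x y.
Proof. by move=> hM /close_small h; apply/close_small; apply: small_le h. Qed.

Lemma small_strict x e : x != 0 -> small (nu x + 1) e -> x + e != 0 /\ nu (x + e) = nu x.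
Proof.
move=> x0 [->|he]; first by rewrite addr0.
have [e0|e0] := eqVneq e 0; first by rewrite e0 addr0.
have hxe : x + e != 0.
  apply/negP => /eqP h; move: he; rewrite (_ : e = - x); last first.
    by apply/eqP; rewrite -subr_eq0 opprK addrC h.
  rewrite nuN //; lia.
split => //.
have h1 := nuD x0 e0 hxe.
have mn : Num.min (nu x) (nu e) = nu x.
  by apply/min_idPl; apply: le_trans he; rewrite lerDl.
rewrite mn in h1.
have h2 : Num.min (nu (x + e)) (nu (- e)) <= nu x.
  have e0' : - e != 0 by rewrite oppr_eq0.
  by have := nuD hxe e0'; rewrite addrK; apply.
rewrite nuN // in h2.
apply/eqP; rewrite eq_le h1 andbT.
move: h2; rewrite ge_min => /orP [//|h2]; lia.
Qed.

End Val.

Section Gen.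
Variables (A : comNzRingType) (S : A -> Prop).

Lemma gen_ideal0 : gen_ideal S 0.
Proof. by exists 0%N, (fun _ => 0), (fun _ => 0); split => [[]//|]; rewrite big_ord0. Qed.

Lemma gen_ideal_gen x : S x -> gen_ideal S x.
Proof.
by move=> h; exists 1%N, (fun _ => 1), (fun _ => x); split => //; rewrite big_ord1 mul1r.
Qed.

Lemma gen_ideal_mul c x : gen_ideal S x -> gen_ideal S (c * x).
Proof.
move=> [k [a [s [hs ->]]]]; exists k, (fun i => c * a i), s; split => //.
by rewrite mulr_sumr; apply: eq_bigr => i _; rewrite mulrA.
Qed.

Lemma gen_ideal_add x y : gen_ideal S x -> gen_ideal S y -> gen_ideal S (x + y).
Proof.
move=> [k1 [a1 [s1 [h1 ->]]]] [k2 [a2 [s2 [h2 ->]]]].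
exists (k1 + k2)%N, (fun i => match split i with inl j => a1 j | inr j => a2 j end),
  (fun i => match split i with inl j => s1 j | inr j => s2 j end); split.
  by move=> i; case: (split i).
rewrite big_split_ord /=; congr (_ + _); apply: eq_bigr => i _.
  by rewrite (unsplitK (inl i)).
by rewrite (unsplitK (inr i)).
Qed.

End Gen.
Section Dig.
Variables (K : fieldType) (nu : K -> int) (Hnu : is_discrete_valuation nu).
Variables (p : K) (Hp0 : p != 0) (Hp : nu p = 1).
Variables (kk : fieldType) (red : K -> kk) (Hred : is_residue_map nu red).
Variables (R : comNzRingType) (iota : {rmorphism R -> K}).
Hypothesis HRO : forall r, inO nu (iota r).
Hypothesis Hdense : dense_in_O nu iota.

Local Notation small := (small nu).

Lemma nuX k : nu (p ^+ k) = k%:Z.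
Proof.
elim: k => [|k IH]; first by rewrite expr0 nu1.
rewrite exprS nuM // ?expf_neq0 // IH Hp.
by rewrite -addn1 PoszD addrC.
Qed.

Lemma pX_neq0 k : p ^+ k != 0. Proof. exact: expf_neq0. Qed.

Lemma smallX k : small k%:Z (p ^+ k).
Proof. by right; rewrite nuX. Qed.

Lemma small_mulX M k x : small M x -> small (M + k%:Z) (x * p ^+ k).
Proof. move=> h; apply: smallM => //; right; by rewrite nuX. Qed.

Lemma small_divX M k x : small (M + k%:Z) x -> small M (x / p ^+ k).
Proof.
move=> h; have := smallM Hnu h (_ : small (- k%:Z) ((p ^+ k)^-1)).
rewrite addrK; apply; right; by rewrite nuV // ?pX_neq0 // nuX.
Qed.

Lemma redE : [/\ (forall x y, inO nu x -> inO nu y -> red (x + y) = red x + red y),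
      (forall x y, inO nu x -> inO nu y -> red (x * y) = red x * red y),
      red 1 = 1,
      (forall x, inO nu x -> (red x = 0 <-> (x = 0 \/ 0 < nu x))) &
      (forall z : kk, exists x, inO nu x /\ red x = z)].
Proof. exact: Hred. Qed.

Lemma inO0 : inO nu 0. Proof. by left. Qed.

Lemma red0 : red 0 = 0.
Proof.
case: Hred => hD _ _ _ _; have := hD 0 0 inO0 inO0; rewrite addr0 => h.
by apply: (addrI (red 0)); rewrite addr0 -h.
Qed.

Lemma redD x y : inO nu x -> inO nu y -> red (x + y) = red x + red y.
Proof. by case: Hred => hD _ _ _ _; apply: hD. Qed.

Lemma redM x y : inO nu x -> inO nu y -> red (x * y) = red x * red y.
Proof. by case: Hred => _ hM _ _ _; apply: hM. Qed.

Lemma inON x : inO nu x -> inO nu (- x).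
Proof. exact: smallN. Qed.

Lemma inOD x y : inO nu x -> inO nu y -> inO nu (x + y).
Proof. exact: smallD. Qed.

Lemma redN x : inO nu x -> red (- x) = - red x.
Proof.
move=> hx; have := redD hx (inON hx); rewrite subrr red0 => h.
by apply: (addrI (red x)); rewrite -h subrr.
Qed.

Lemma redB x y : inO nu x -> inO nu y -> red (x - y) = red x - red y.
Proof. by move=> hx hy; rewrite redD ?redN //; apply: inON. Qed.

Lemma red_eq0 x : inO nu x -> (red x = 0 <-> small 1 x).
Proof.
by case: Hred => _ _ _ h _ hx; rewrite h //.
Qed.

Lemma red_close x y : inO nu x -> inO nu y -> close nu 1 x y -> red x = red y.
Proof.
move=> hx hy /close_small h; apply/eqP; rewrite -subr_eq0 -redB //.
by apply/eqP/red_eq0 => //; apply: smallB.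
Qed.

Definition phi0 (r : R) := red (iota r).
Lemma phi0B x y : phi0 (x - y) = phi0 x - phi0 y.
Proof. by rewrite /phi0 rmorphB redB. Qed.
Lemma phi0M x y : phi0 (x * y) = phi0 x * phi0 y.
Proof. by rewrite /phi0 rmorphM redM. Qed.
Lemma phi01 : phi0 1 = 1.
Proof. by case: Hred => _ _ h _ _; rewrite /phi0 rmorph1. Qed.

Definition smallb M x := (x == 0) || (M <= nu x).
Definition inOb x := smallb 0 x.

Lemma smallbP M x : reflect (small M x) (smallb M x).
Proof.
apply: (iffP orP); case=> h; [left; exact/eqP|by right|by left; apply/eqP|by right].
Qed.

Lemma exdig x : exists r : R, ~~ inOb x || smallb 1 (x - iota r).
Proof.
case hx: (inOb x); last by exists 0.
have [r hr] := Hdense (elimT (smallbP 0 x) hx) 1.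
by exists r; apply/smallbP/close_small.
Qed.

Definition dig x := if smallb 1 x then 0 else xchoose (exdig x).

Lemma dig_small x : inO nu x -> small 1 (x - iota (dig x)).
Proof.
move=> hx; rewrite /dig; case: ifP => h.
  by rewrite rmorph0 subr0; apply/smallbP.
case/orP: (xchooseP (exdig x)) => [/negP []|/smallbP //].
exact/smallbP.
Qed.

Lemma dig0 x : small 1 x -> dig x = 0.
Proof. by move=> /smallbP h; rewrite /dig h. Qed.

Lemma inO_div_p x : small 1 x -> inO nu (x / p).
Proof. by move=> h; apply: (small_divX (k := 1)); rewrite add0r. Qed.

Fixpoint xs x k := if k is k'.+1 then (xs x k' - iota (dig (xs x k'))) / p else x.
Definition digs x k := dig (xs x k).

Lemma xs_O x k : inO nu x -> inO nu (xs x k).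
Proof.
move=> hx; elim: k => [//|k IH] /=.
by apply: inO_div_p; apply: dig_small.
Qed.

Lemma xs_expand x N :
  x = \sum_(b < N) iota (digs x b) * p ^+ b + xs x N * p ^+ N.
Proof.
elim: N => [|N IH]; first by rewrite big_ord0 add0r expr0 mulr1.
rewrite {1}IH big_ord_recr /= -addrA; congr (_ + _).
rewrite /digs exprSr; field.
exact: Hp0.
Qed.

Lemma digs_conv x : inO nu x ->
  converges_to nu (fun N => \sum_(b < N) iota (digs x b) * p ^+ b) x.
Proof.
move=> hx M; exists `|M|%N => a ha; apply/close_small.
rewrite {2}(xs_expand x a) opprD addrA subrr add0r; apply: (smallN Hnu).
have := small_mulX (M := 0) a (xs_O a hx); rewrite add0r; apply: small_le.
apply: le_trans (lez_abs M) _; by rewrite lez_nat.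
Qed.

Lemma xs_zero k : xs 0 k = 0.
Proof.
elim: k => [//|k IH] /=; rewrite IH dig0 ?rmorph0 ?subr0 ?mul0r //; exact: small0.
Qed.

Lemma digs_zero k : digs 0 k = 0.
Proof. by rewrite /digs xs_zero dig0 //; exact: small0. Qed.

Section NZ.
Variables (x : K) (hx : inO nu x) (x0 : x != 0).
Let V := `|nu x|%N.
Lemma nuxV : nu x = V%:Z.
Proof. rewrite /V gez0_abs //; case: hx => // h; by move: x0; rewrite h eqxx. Qed.

Lemma xs_pre k : (k <= V)%N -> xs x k = x / p ^+ k.
Proof.
elim: k => [|k IH] hk; first by rewrite expr0 divr1.
rewrite /= IH ?(ltnW hk) // dig0.
  rewrite rmorph0 subr0 exprSr; field; apply/andP; split => //; exact: pX_neq0.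
apply: small_divX; right; rewrite nuxV -PoszD lez_nat addnC addn1 //.
Qed.

Lemma digs_lt k : (k < V)%N -> digs x k = 0.
Proof.
move=> hk; rewrite /digs xs_pre ?(ltnW hk) // dig0 //.
apply: small_divX; right; rewrite nuxV -PoszD lez_nat addnC addn1 //.
Qed.

Lemma digs_ge k : digs x k != 0 -> (V <= k)%N.
Proof. by apply: contraR; rewrite -ltnNge => /digs_lt ->; rewrite eqxx. Qed.

Lemma digs_V : digs x V != 0 /\ phi0 (digs x V) = red (x * p ^ (- nu x)).
Proof.
have ey : x * p ^ (- nu x) = xs x V by rewrite xs_pre // nuxV -exprnN.
rewrite ey /digs; set y := xs x V.
have y0 : y != 0 by rewrite /y xs_pre // mulf_neq0 // invr_eq0 pX_neq0.
have nuy : nu y = 0.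
  rewrite /y xs_pre // nuM // ?invr_eq0 ?pX_neq0 // nuV ?pX_neq0 // nuX nuxV.
  by rewrite subrr.
have hy : inO nu y by right; rewrite nuy.
have hs := dig_small hy.
split.
  apply/negP => /eqP d0; move: hs; rewrite d0 rmorph0 subr0.
  by case=> [/eqP|]; [rewrite (negbTE y0)|rewrite nuy].
rewrite /phi0; apply: esym; apply: red_close => //.
exact/close_small.
Qed.
End NZ.

End Dig.

Lemma sum_single (V : nmodType) (T : eqType) (r : seq T) (P : pred T) (F : T -> V) x0 :
  uniq r -> (forall x, x \in r -> P x -> x != x0 -> F x = 0) ->
  \sum_(x <- r | P x) F x = if (x0 \in r) && P x0 then F x0 else 0.
Proof.
move=> ur h; case: ifP => [/andP [xr Px]|hn].
  rewrite (big_rem x0) //= Px big1_seq ?addr0 // => x /andP [Px' xr'].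
  apply: h => //; first exact: mem_rem xr'.
  by move: xr'; rewrite mem_rem_uniq // inE => /andP [].
rewrite big1_seq // => x /andP [Px xr]; apply: h => //.
by apply/negP => /eqP ex; move: hn; rewrite -ex xr Px.
Qed.

Section MP.
Variables (n : nat).

Definition mk (b : nat) (a : 'X_{1..n}) : 'X_{1..n.+1} :=
  [multinom (if unlift ord0 i is Some j then a j else b) | i < n.+1].

Lemma mk0 b a : mk b a ord0 = b.
Proof. by rewrite /mk mnmE unlift_none. Qed.

Lemma mtail_mk b a : mtail (mk b a) = a.
Proof. by apply/mnmP => j; rewrite /mtail !mnmE liftK. Qed.

Lemma mtailE (m : 'X_{1..n.+1}) j : mtail m j = m (lift ord0 j).
Proof. by rewrite /mtail mnmE. Qed.

Lemma mk_eta (m : 'X_{1..n.+1}) : mk (m ord0) (mtail m) = m.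
Proof.
apply/mnmP => i; rewrite /mk mnmE.
by case: unliftP => [j ->|->] //; rewrite mtailE.
Qed.

Lemma mk_eq (m : 'X_{1..n.+1}) b a : (mk b a == m) = (m ord0 == b) && (mtail m == a).
Proof.
apply/eqP/andP => [<-|[/eqP <- /eqP <-]]; last exact: mk_eta.
by rewrite mk0 mtail_mk.
Qed.

Variables (kk : fieldType) (R : comNzRingType) (phi : {rmorphism R -> kk}).

Definition psi : {rmorphism R -> {mpoly kk[n]}} := (@mpolyC n kk) \o phi.
Definition hX (i : 'I_n.+1) : {mpoly kk[n]} :=
  if unlift ord0 i is Some j then 'X_j else 1.

Definition Hom (g : {mpoly R[n.+1]}) : {mpoly kk[n]} := mmap psi hX g.

Lemma mmap1_hX (m : 'X_{1..n.+1}) : mmap1 hX m = 'X_[mtail m].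
Proof.
rewrite /mmap1 big_ord_recl /hX unlift_none expr1n mul1r -mmap1_id /mmap1.
by apply: eq_bigr => j _; rewrite liftK mtailE.
Qed.

Lemma HomE g : Hom g = \sum_(m <- msupp g) phi g@_m *: 'X_[mtail m].
Proof.
by rewrite /Hom /mmap; apply: eq_bigr => m _; rewrite mmap1_hX /= mul_mpolyC.
Qed.

Lemma HomD g1 g2 : Hom (g1 + g2) = Hom g1 + Hom g2.
Proof. exact: mmapD. Qed.

Lemma HomM g1 g2 : Hom (g1 * g2) = Hom g1 * Hom g2.
Proof. by rewrite /Hom (mmap_is_multiplicative hX psi).1. Qed.

Lemma Hom0 : Hom 0 = 0.
Proof. exact: mmap0. Qed.

Lemma Hom_sum (I : Type) (r : seq I) (F : I -> {mpoly R[n.+1]}) :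
  Hom (\sum_(i <- r) F i) = \sum_(i <- r) Hom (F i).
Proof.
elim: r => [|i r IH]; first by rewrite !big_nil Hom0.
by rewrite !big_cons HomD IH.
Qed.

Lemma Hom_sumP (I : Type) (r : seq I) (P : pred I) (F : I -> {mpoly R[n.+1]}) :
  Hom (\sum_(i <- r | P i) F i) = \sum_(i <- r | P i) Hom (F i).
Proof.
rewrite big_mkcond Hom_sum [RHS]big_mkcond; apply: eq_bigr => i _.
by case: (P i); rewrite ?Hom0.
Qed.

Lemma HomZX c (m : 'X_{1..n.+1}) : Hom (c *: 'X_[m]) = phi c *: 'X_[mtail m].
Proof. by rewrite /Hom mmapZ mmapX mmap1_hX /= mul_mpolyC. Qed.

Lemma Hom_coef g a :
  (Hom g)@_a = \sum_(m <- msupp g | mtail m == a) phi g@_m.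
Proof.
rewrite HomE (raddf_sum (mcoeff a)) [RHS]big_mkcond /=; apply: eq_bigr => m _.
by rewrite mcoeffZ mcoeffX; case: eqP; rewrite ?mulr1 ?mulr0.
Qed.

Lemma Hom_surj : (forall z : kk, exists r, phi r = z) ->
  forall q : {mpoly kk[n]}, exists g, Hom g = q.
Proof.
move=> hs q; rewrite [q]mpolyE.
elim: (msupp q) => [|a s [g hg]]; first by exists 0; rewrite Hom0 big_nil.
have [r hr] := hs q@_a.
by exists (r *: 'X_[mk 0 a] + g); rewrite HomD HomZX hg big_cons mtail_mk hr.
Qed.

End MP.

Section Main.
Variables (Fr : realType).
Variables (K : fieldType) (nu : K -> int) (Hnu : is_discrete_valuation nu).
Variables (p : K) (Hp0 : p != 0) (Hp : nu p = 1).
Variables (kk : fieldType) (red : K -> kk) (Hred : is_residue_map nu red).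
Variables (R : comNzRingType) (iota : {rmorphism R -> K}).
Hypothesis HRO : forall r, inO nu (iota r).
Hypothesis Hdense : dense_in_O nu iota.
Variables (n : nat) (w : 'I_n -> Fr).

Definition phiF (r : R) := red (iota r).
HB.instance Definition _ := GRing.isZmodMorphism.Build R kk phiF (phi0B Hnu Hred HRO).
HB.instance Definition _ := GRing.isMonoidMorphism.Build R kk phiF
   (conj (phi01 Hred iota) (phi0M Hred HRO)).
Definition phiR : {rmorphism R -> kk} := phiF.

Lemma red_t1E (g : {mpoly R[n.+1]}) : red_t1 red iota g = Hom phiR g.
Proof. by rewrite HomE. Qed.

Local Notation small := (small nu).
Local Notation wt' := (@wt Fr n (-1) w).

Lemma wt_le b a b' : (wt' b a <= wt' b' a) = (b' <= b)%N.
Proof. by rewrite /wt lerD2r !mulN1r lerN2 ler_nat. Qed.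

Lemma wt_inj b a b' : wt' b a = wt' b' a -> b = b'.
Proof.
by move=> h; apply/eqP; rewrite eqn_leq -!(wt_le _ a) h lexx.
Qed.

Definition maxw (FF : pstx R n) b a :=
  FF b a != 0 /\ forall b' a', FF b' a' != 0 -> wt' b' a' <= wt' b a.

Lemma maxw_min FF b a : maxw FF b a -> forall b', (b' < b)%N -> FF b' a = 0.
Proof.
move=> [_ h] b' hb; apply/eqP; apply: contraLR hb => /h.
by rewrite wt_le -leqNgt.
Qed.

Section A.
Variables (FF : pstx R n) (f : {mpoly K[n]}) (hpi : is_pi nu iota p FF f).

Lemma trunc a k : close nu k%:Z f@_a (\sum_(b < k) iota (FF b a) * p ^+ b).
Proof.
have [N0 hN] := hpi.2 a k%:Z.
have := hN (k + N0)%N (leq_addl _ _); rewrite big_split_ord /= => h.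
apply: (close_sym Hnu); apply: (close_trans Hnu _ h).
apply/close_small; rewrite opprD addrA subrr add0r; apply: (smallN Hnu).
apply: (small_sum Hnu) => i _.
have := smallMO Hnu (HRO (FF (k + i)%N a)) (smallX Hnu Hp0 Hp (k + i)); apply: small_le.
by rewrite lez_nat leq_addr.
Qed.

Hypothesis hfO : forall a, inO nu f@_a.

Lemma nu_nat a : f@_a != 0 -> nu f@_a = (`|nu f@_a|%N)%:Z.
Proof. by move=> h; rewrite gez0_abs //; case: (hfO a) => // e; rewrite e eqxx in h. Qed.

Lemma exists_low a : f@_a != 0 ->
  exists b, (b <= `|nu f@_a|)%N /\ FF b a != 0.
Proof.
move=> fa0; set V := `|nu f@_a|%N.
case: (boolP [exists b : 'I_V.+1, FF b a != 0]) => [/existsP [b hb]|].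
  by exists b; split => //; rewrite -ltnS.
rewrite negb_exists => /forallP hall.
have := trunc a V.+1; rewrite big1 => [|b _]; last first.
  by have := hall b; rewrite negbK => /eqP ->; rewrite rmorph0 mul0r.
move/close_small; rewrite subr0; case=> [e|]; first by rewrite e eqxx in fa0.
by rewrite nu_nat // lez_nat ltnn.
Qed.

Lemma K1 a b : (forall b', (b' < b)%N -> FF b' a = 0) ->
  close nu (b.+1)%:Z f@_a (iota (FF b a) * p ^+ b).
Proof.
move=> hmin; have := trunc a b.+1; rewrite big_ord_recr /= big1 ?add0r // => i _.
by rewrite hmin // rmorph0 mul0r.
Qed.

Lemma K1a a b : (forall b', (b' < b)%N -> FF b' a = 0) -> phiR (FF b a) != 0 ->
  [/\ f@_a != 0, nu f@_a = b%:Z & red (f@_a * p ^ (- nu f@_a)) = phiR (FF b a)].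
Proof.
move=> hmin hph; have hK := K1 hmin.
set c := iota (FF b a) in hK hph *.
have cO : inO nu c := HRO _.
have hc : ~ small 1 c.
  by move=> hs; move: hph; rewrite /= /phiF -/c (iffRL (red_eq0 Hred cO) hs) eqxx.
have c0 : c != 0 by apply/negP => /eqP e; apply: hc; left.
have nuc : nu c = 0.
  case: cO => [e|h]; first by rewrite e eqxx in c0.
  apply/eqP; rewrite eq_le h andbT; rewrite leNgt; apply/negP => h1.
  by apply: hc; right; rewrite -gtz0_ge1.
set x := c * p ^+ b.
have x0 : x != 0 by rewrite mulf_neq0 // pX_neq0.
have nux : nu x = b%:Z by rewrite nuM // ?pX_neq0 // nuc nuX // add0r.
have he : small (nu x + 1) (f@_a - x) by rewrite nux addrC; apply/close_small.
have [hf0 hnu] := small_strict Hnu x0 he; rewrite addrC subrK in hf0 hnu.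
rewrite hnu nux; split => //.
have -> : f@_a * p ^ (- b%:Z) = c + (f@_a - x) / p ^+ b.
  rewrite -exprnN /x; field; exact: pX_neq0.
have hs : small 1 ((f@_a - x) / p ^+ b).
  by apply: small_divX => //; rewrite addrC -nux.
rewrite /= /phiF -/c; apply: (red_close Hnu Hred).
- apply: (smallD Hnu) => //; exact: small_le hs.
- exact: cO.
- by apply/close_small; rewrite addrC addKr.
Qed.

Lemma K1b a b : (forall b', (b' < b)%N -> FF b' a = 0) -> phiR (FF b a) = 0 ->
  small (b.+1)%:Z f@_a.
Proof.
move=> hmin hph; have /close_small hK := K1 hmin.
have cO : inO nu (iota (FF b a)) := HRO _.
have hc : small 1 (iota (FF b a)) by apply/(red_eq0 Hred cO).
have hx : small (b.+1)%:Z (iota (FF b a) * p ^+ b).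
  apply: small_le (small_mulX Hnu Hp0 Hp b hc).
  by rewrite -addn1 PoszD addrC.
by have := smallD Hnu hK hx; rewrite subrK.
Qed.

Definition Tn a := dotw w a - (nu f@_a)%:~R.
Definition maxc a := all (fun a' => Tn a' <= Tn a) (msupp f).

Lemma Tn_wt a b : nu f@_a = b%:Z -> Tn a = wt' b a.
Proof. by move=> h; rewrite /Tn /wt h mulN1r addrC. Qed.

Lemma Tn_le a : a \in msupp f -> forall b0 a0, maxw FF b0 a0 -> Tn a <= wt' b0 a0.
Proof.
rewrite mcoeff_msupp => ha b0 a0 [_ hm].
have [b [hb hF]] := exists_low ha.
rewrite (Tn_wt (nu_nat ha)); apply: le_trans (hm _ _ hF).
by rewrite wt_le.
Qed.

Lemma init_coef a : (init_nu nu red p w f)@_a =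
  if (a \in msupp f) && maxc a then red (f@_a * p ^ (- nu f@_a)) else 0.
Proof.
rewrite /init_nu (raddf_sum (mcoeff a)) /=.
rewrite (sum_single (x0 := a)) ?msupp_uniq //.
  by rewrite mcoeffZ mcoeffX eqxx mulr1.
by move=> x _ _ hx; rewrite mcoeffZ mcoeffX (negbTE hx) mulr0.
Qed.

Variables (g : {mpoly R[n.+1]}) (hg : is_init_form (-1) w FF g).

Lemma g_supp m : m \in msupp g -> maxw FF (m ord0) (mtail m) /\ g@_m = FF (m ord0) (mtail m).
Proof.
move=> hm; have [h1 h2] := hg m.
case: (classic (maxw FF (m ord0) (mtail m))) => hw; first by split => //; apply: h1.
by move: hm; rewrite mcoeff_msupp h2 // eqxx.
Qed.

Lemma g_coef b a : maxw FF b a -> g@_(mk b a) = FF b a.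
Proof. by move=> h; have [h1 _] := hg (mk b a); rewrite /= mk0 mtail_mk in h1; apply: h1. Qed.

Lemma g_uniq m1 m2 : m1 \in msupp g -> m2 \in msupp g -> mtail m1 = mtail m2 -> m1 = m2.
Proof.
move=> h1 h2 e; have [[_ w1] _] := g_supp h1; have [[f2 w2] _] := g_supp h2.
have [[f1 _] _] := g_supp h1.
have := w1 _ _ f2; have := w2 _ _ f1; rewrite e => l1 l2.
have eb : m1 ord0 = m2 ord0 by apply: (wt_inj (a := mtail m2)); apply/eqP; rewrite eq_le l1 l2.
by rewrite -(mk_eta m1) -(mk_eta m2) eb e.
Qed.

Lemma coefA m : m \in msupp g -> (Hom phiR g)@_(mtail m) = phiR (FF (m ord0) (mtail m)).
Proof.
move=> hm; rewrite Hom_coef (sum_single (x0 := m)) ?msupp_uniq //.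
  by rewrite hm eqxx /= (g_supp hm).2.
by move=> x hx /eqP ex hxm; case/negP: hxm; apply/eqP; apply: g_uniq.
Qed.

Lemma coefB a : (forall m, m \in msupp g -> mtail m != a) -> (Hom phiR g)@_a = 0.
Proof.
move=> h; rewrite Hom_coef big1_seq // => m /andP [/eqP e hm].
by move: (h m hm); rewrite e eqxx.
Qed.

Lemma lemmaA : Hom phiR g = 0 \/ Hom phiR g = init_nu nu red p w f.
Proof.
case: (classic (exists b0 a0, maxw FF b0 a0 /\ phiR (FF b0 a0) != 0)) =>
    [[b0 [a0 [hm0 hph0]]]|hn]; last first.
  left; apply/mpolyP => a; rewrite mcoeff0.
  case: (boolP (has (fun m => mtail m == a) (msupp g))) => [/hasP [m hm /eqP <-]|hno].
    rewrite coefA //; case: (eqVneq (phiR (FF (m ord0) (mtail m))) 0) => // hph.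
    exfalso; apply: hn.
    by exists (m ord0), (mtail m); split => //; exact: (g_supp hm).1.
  apply: coefB => m hm; apply/negP => hma; case/negP: hno; apply/hasP.
  by exists m.
right.
have [hfa0 hnu0 _] := K1a (maxw_min hm0) hph0.
have a0s : a0 \in msupp f by rewrite mcoeff_msupp.
have TW : Tn a0 = wt' b0 a0 := Tn_wt hnu0.
apply/mpolyP => a; rewrite init_coef.
case: (boolP (has (fun m => mtail m == a) (msupp g))) => [/hasP [m hm /eqP <-]|hno].
  have [hmw _] := g_supp hm; rewrite coefA //.
  set b := m ord0 in hmw *; set a' := mtail m in hmw *.
  case: (eqVneq (phiR (FF b a')) 0) => hph.
    rewrite hph; case: ifP => // /andP [ha hmc]; exfalso.
    have hs := K1b (maxw_min hmw) hph.
    have fa0 : f@_a' != 0 by rewrite -mcoeff_msupp.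
    case: hs => [e|hnu]; first by rewrite e eqxx in fa0.
    have h1 := (allP hmc) a0 a0s.
    have h2 := hm0.2 _ _ hmw.1.
    move: h1 h2; rewrite TW /Tn /wt.
    have : ((b.+1)%:Z)%:~R <= (nu f@_a')%:~R :> Fr by rewrite ler_int.
    rewrite -[((b.+1)%:Z)%:~R]/((b.+1)%:R : Fr) -addn1 natrD.
    move=> h3 h1 h2; have := le_trans h2 h1.
    rewrite mulN1r addrC lerD2l lerN2 => h4.
    have := le_trans h3 h4; rewrite -[X in _ <= X]addr0 lerD2l.
    by rewrite ler10.
  have [fa0 hnu hred] := K1a (maxw_min hmw) hph.
  have -> : (a' \in msupp f) && maxc a'.
    rewrite mcoeff_msupp fa0 /=; apply/allP => x hx.
    apply: le_trans (Tn_le hx hm0) _.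
    by rewrite (Tn_wt hnu); apply: hmw.2; exact: hm0.1.
  by rewrite hred.
rewrite coefB; last first.
  by move=> m hm; apply/negP => hma; case/negP: hno; apply/hasP; exists m.
case: ifP => // /andP [ha hmc]; exfalso.
have fa0 : f@_a != 0 by rewrite -mcoeff_msupp.
have [b [hb hF]] := exists_low fa0.
have hmw : maxw FF b a.
  split => // b' a'' hF'.
  apply: le_trans (hm0.2 _ _ hF') _; rewrite -TW.
  apply: le_trans ((allP hmc) a0 a0s) _.
  by rewrite (Tn_wt (nu_nat fa0)) wt_le.
case/negP: hno; apply/hasP; exists (mk b a); last by rewrite mtail_mk.
by rewrite mcoeff_msupp g_coef.
Qed.

End A.

Section B.
Variables (f : {mpoly K[n]}) (hfO : forall a, inO nu f@_a).

Definition FFd : pstx R n := fun b a => digs p Hdense f@_a b.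
Let V a := `|nu f@_a|%N.

Lemma FFd_supp b a : FFd b a != 0 -> a \in msupp f.
Proof.
rewrite mcoeff_msupp /FFd; apply: contraNN => /eqP ->.
by rewrite digs_zero.
Qed.

Lemma nuVf a : a \in msupp f -> nu f@_a = (V a)%:Z.
Proof.
by rewrite mcoeff_msupp => h; rewrite /V gez0_abs //; case: (hfO a) => // e; rewrite e eqxx in h.
Qed.

Lemma FFd_V a : a \in msupp f ->
  FFd (V a) a != 0 /\ phiR (FFd (V a) a) = red (f@_a * p ^ (- nu f@_a)).
Proof.
move=> ha; have h0 : f@_a != 0 by rewrite -mcoeff_msupp.
exact: (digs_V Hnu Hp0 Hp Hred HRO Hdense (hfO a) h0).
Qed.

Lemma FFd_ge b a : FFd b a != 0 -> (V a <= b)%N.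
Proof.
move=> h; have ha := FFd_supp h; have h0 : f@_a != 0 by rewrite -mcoeff_msupp.
exact: (digs_ge Hnu Hp0 Hp (hfO a) h0 h).
Qed.

Lemma TnV a : a \in msupp f -> Tn f a = wt' (V a) a.
Proof. by move=> ha; rewrite /Tn /wt nuVf // mulN1r addrC. Qed.

Lemma maxwB b a : maxw FFd b a <-> [/\ a \in msupp f, maxc f a & b = V a].
Proof.
split.
  move=> [hF hm]; have ha := FFd_supp hF; have hVb := FFd_ge hF.
  have hbV : (b <= V a)%N by rewrite -(wt_le _ a); apply: hm; exact: (FFd_V ha).1.
  have eb : b = V a by apply/eqP; rewrite eqn_leq hbV hVb.
  split => //; apply/allP => x hx.
  rewrite (TnV hx) (TnV ha) -eb; apply: hm; exact: (FFd_V hx).1.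
move=> [ha hc ->]; split; first exact: (FFd_V ha).1.
move=> b' a' hF; have ha' := FFd_supp hF.
apply: le_trans (_ : wt' (V a') a' <= _); first by rewrite wt_le; apply: FFd_ge.
by rewrite -(TnV ha') -(TnV ha); apply: (allP hc).
Qed.

Definition gB : {mpoly R[n.+1]} :=
  \sum_(a <- msupp f | maxc f a) FFd (V a) a *: 'X_[mk (V a) a].

Lemma gB_coef m : gB@_m = if (mtail m \in msupp f) && maxc f (mtail m)
  then FFd (V (mtail m)) (mtail m) * (m ord0 == V (mtail m))%:R else 0.
Proof.
rewrite /gB (raddf_sum (mcoeff m)) /= (sum_single (x0 := mtail m)) ?msupp_uniq //.
  by rewrite mcoeffZ mcoeffX mk_eq eqxx andbT.
move=> x _ _ hx; rewrite mcoeffZ mcoeffX mk_eq.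
have -> : (mtail m == x) = false by apply/negbTE; rewrite eq_sym.
by rewrite andbF mulr0.
Qed.

Lemma gB_init : is_init_form (-1) w FFd gB.
Proof.
move=> m /=; split.
  move=> /maxwB [ha hc eb]; rewrite gB_coef ha hc /= -eb eqxx mulr1.
  by rewrite eb.
move=> hn; rewrite gB_coef; case: ifP => // /andP [ha hc].
case: eqP => [e|_]; last by rewrite mulr0.
by exfalso; apply: hn; apply/maxwB.
Qed.

Lemma gB_Hom : Hom phiR gB = init_nu nu red p w f.
Proof.
have -> : init_nu nu red p w f =
  \sum_(a <- msupp f | maxc f a) red (f@_a * p ^ (- nu f@_a)) *: 'X_[a] by [].
rewrite /gB Hom_sumP big_seq_cond [RHS]big_seq_cond; apply: eq_bigr => a /andP [ha _].
by rewrite HomZX mtail_mk (FFd_V ha).2.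
Qed.

Lemma FFd_pi : is_pi nu iota p FFd f.
Proof.
split; first by exists (msupp f) => b a; apply: FFd_supp.
move=> a; exact: (digs_conv Hnu Hp0 Hp Hdense (hfO a)).
Qed.

End B.

Lemma phi_surj : forall z : kk, exists r, phiR r = z.
Proof.
move=> z; case: Hred => _ _ _ _ hs; have [x [hx <-]] := hs z.
have [r hr] := Hdense hx 1; exists r.
by apply: esym; apply: (red_close Hnu Hred hx (HRO r) hr).
Qed.

Lemma mainL (I : {mpoly K[n]} -> Prop) (HI : is_OK_ideal nu I) q :
  red_t1_image red iota (init_ideal (-1) w (pi_preimage nu iota p I)) q
  <-> init_nu_ideal nu red p w I q.
Proof.
have [HIO HI0 HIadd HImul] := HI.
have init0 : init_nu nu red p w (0 : {mpoly K[n]}) = 0.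
  rewrite /init_nu; have -> : msupp (0 : {mpoly K[n]}) = [::].
    by apply/eqP; rewrite msupp_eq0.
  by rewrite big_nil.
split.
  move=> [g [[k [a [s [hs ->]]]] <-]]; rewrite red_t1E.
  exists k, (fun i => Hom phiR (a i)), (fun i => Hom phiR (s i)); split.
    move=> i; have [F [[hpx [f [hIf hpi]]] hini]] := hs i.
    have hfO : forall m, inO nu f@_m := HIO f hIf.
    case: (lemmaA hpi hfO hini) => ->; first by exists 0; split => //; rewrite init0.
    by exists f.
  by rewrite Hom_sum; apply: eq_bigr => i _; exact: HomM.
move=> [k [a [s [hs ->]]]].
elim: k a s hs => [|k IH] a s hs.
  exists 0; split; first exact: gen_ideal0.
  by rewrite red_t1E Hom0 big_ord0.
rewrite big_ord_recr /=.
have [g1 [h1 e1]] := IH (fun i => a (widen_ord (leqnSn k) i))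
   (fun i => s (widen_ord (leqnSn k) i)) (fun i => hs _).
have [f [hIf ->]] := hs ord_max.
have hfO : forall m, inO nu f@_m := HIO f hIf.
have [c hc] := Hom_surj phi_surj (a ord_max).
exists (g1 + c * gB f); split.
  apply: gen_ideal_add h1 _; apply: gen_ideal_mul; apply: gen_ideal_gen.
  exists (FFd f); split; last exact: gB_init.
  split; first exact: (FFd_pi hfO).1.
  by exists f; split => //; exact: FFd_pi.
by rewrite red_t1E HomD HomM -red_t1E e1 gB_Hom // hc.
Qed.

End Main.

Unset Implicit Arguments.
Set Strict Implicit.

Theorem proposition2p8
  (F : realType)                                   (* the real numbers *)
  (K : fieldType) (nu : K -> int) (p : K)
  (Hnu : is_discrete_valuation nu) (Hp0 : p != 0) (Hp : nu p = 1)
  (Hcomplete : complete_val nu)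
  (kk : fieldType) (red : K -> kk) (Hred : is_residue_map nu red)
  (R : comNzRingType) (iota : {rmorphism R -> K})
  (Hinj : injective iota) (HRO : forall r, inO nu (iota r))
  (Hdense : dense_in_O nu iota) (HpR : exists p0 : R, iota p0 = p)
  (Hnoeth : noetherian R)
  (n : nat) (I : {mpoly K[n]} -> Prop) (HI : is_OK_ideal nu I)
  (w : 'I_n -> F) :
  forall q : {mpoly kk[n]},
    red_t1_image red iota (init_ideal (-1) w (pi_preimage nu iota p I)) q
    <-> init_nu_ideal nu red p w I q.
Proof.
move=> q; exact: (mainL Hnu Hp0 Hp Hred HRO Hdense w HI q).
Qed.
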